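(* Let $\Phi$ be a collection of repulsive potentials on $\mathbb{X}$, let $U\subset\mathbb{C}$ be bounded, and let $\Lambda\subset\mathbb{X}$ be bounded and measurable. Then the family of functions $\{U\to\mathbb{C},\ \lambda\mapsto Z_{\Lambda,\phi}(\lambda)\ :\ \phi\in\Phi\}$ is uniformly equicontinuous. Moreover, if $\Phi$ is closed under modification and is $\delta$-zero-free on $\Lambda$ at some activity $\lambda_0\in\mathbb{C}$ for some $\delta>0$, then there is a complex neighborhood $W$ of $\lambda_0$ such that the family $\{W\to\mathbb{C},\ \lambda\mapsto\kappa_{\Lambda,\phi,\lambda}(x)\ :\ \phi\in\Phi,\ x\in\Lambda\}$ is well defined and uniformly equicontinuous.
   Context: $(\mathbb{X},d)$ is a complete separable metric space with a locally finite Borel measure $\nu$. A potential $\phi=(\phi_k)_{k\in\mathbb{N}}$ is a family of measurable $\phi_k:\mathbb{X}^k\to\mathbb{R}\cup\{\infty\}$, written $\phi(\mathbf{x})=\phi_k(\mathbf{x})$ for $\mathbf{x}\in\mathbb{X}^k$; repulsive means $\phi_k\ge0$ for all $k$; potentials are assumed symmetric (invariant under permutations of coordinates). For $\mathbf{x}\in\mathbb{X}^k$, $S\subseteq[k]$, $\mathbf{x}_S=(x_i)_{i\in S}$; $H(\mathbf{x})=\sum_{\emptyset\ne S\subseteq[k]}\phi(\mathbf{x}_S)$; $Z_{\Lambda,\phi}(\lambda)=\sum_{k\ge0}\frac{\lambda^k}{k!}\int_{\Lambda^k}e^{-H(\mathbf{x})}\nu^k(d\mathbf{x})$. Pinning: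 for $\mathbf{x}\in\mathbb{X}^k$, $\phi(\cdot\mid\mathbf{x})$ is the potential $\phi(\mathbf{y}\mid\mathbf{x})=\sum_{S\subseteq[k]}\phi(\mathbf{y},\mathbf{x}_S)$ for $\mathbf{y}\in\mathbb{X}^m$ (concatenated tuples; $S=\emptyset$ gives $\phi(\mathbf{y})$); $Z_{\Lambda,\phi}(\lambda\mid\mathbf{x})$ is the partition function of $\phi(\cdot\mid\mathbf{x})$. Modified $k$-point density: if $Z_{\Lambda,\phi}(\lambda)\ne0$, $\kappa_{\Lambda,\phi,\lambda}(\mathbf{x})=\lambda^k Z_{\Lambda,\phi}(\lambda\mid\mathbf{x})/Z_{\Lambda,\phi}(\lambda)$. Fix $z\in\mathbb{X}$ and set $D(\mathbf{x})=\sum_j d(z,x_j)$. For $y\in\mathbb{X}$, $t\in[0,\infty]$: $\phi(\mathbf{x}\mid y_{\prec t})=\phi(\mathbf{x}\mid y)$ if $D(\mathbf{x})<t$ and $=\phi(\mathbf{x})$ otherwise. $\Phi$ is $\delta$-zero-free on $\Lambda$ at $\lambda$ if $|Z_{\Lambda,\phi}(\lambda)|\ge\delta$ for all $\phi\in\Phi$. $\Phi$ is closed under modification if (1) for all $\phi\in\Phi$, $y\in\mathbb{X}$, $t\in[0,\infty]$, $\phi(\cdot\mid y_{\prec t})\in\Phi$, and (2) for all $\phi\in\Phi$ and measurable $\Delta\subseteq\mathbb{X}$, the potential $\psi$ with $\psi_k=\phi_k$ for $k\ge2$ and $\psi_1=\infty$ on $\Delta$, $\psi_1=\phi_1$ off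 $\Delta$, lies in $\Phi$. *)

(* Defs.v *)
From HB Require Import structures.
From mathcomp Require Import all_boot all_order all_algebra.
From mathcomp Require Import all_classical all_reals all_analysis measurable_realfun.
From mathcomp Require Import fingroup perm complex.

Set Implicit Arguments.
Unset Strict Implicit.
Unset Printing Implicit Defensive.

Import Order.TTheory GRing.Theory Num.Theory numFieldNormedType.Exports.
Local Open Scope classical_set_scope.
Local Open Scope ring_scope.

Section Defs.
Context {R : realType} {d : measure_display} {X : measurableType d}.

Definition mball (dist : X -> X -> R) (x : X) (r : R) : set X :=
  [set y | dist x y < r].

Definition mopen (dist : X -> X -> R) (A : set X) : Prop :=
  forall x, A x -> exists2 r : R, 0 < r & mball dist x r `<=` A.

Definition polish_borel (dist : X -> X -> R) : Prop :=
  [/\ (forall x y, dist x y = 0 <-> x = y) /\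
      (forall x y, dist x y = dist y x) /\
      (forall x y z, dist x z <= dist x y + dist y z),
      (forall u : nat -> X,
          (forall e : R, 0 < e -> exists N : nat, forall m n : nat,
               (N <= m)%N -> (N <= n)%N -> dist (u m) (u n) < e) ->
          exists x : X, forall e : R, 0 < e -> exists N : nat, forall n : nat,
               (N <= n)%N -> dist (u n) x < e),
      (exists q : nat -> X, forall (x : X) (e : R), 0 < e ->
          exists n : nat, dist x (q n) < e) &
      (@measurable d X = <<s [set A | mopen dist A] >>)].

Definition mbounded (dist : X -> X -> R) (A : set X) : Prop :=
  exists (x : X) (r : R), A `<=` mball dist x r.

Definition locally_finite (dist : X -> X -> R)
  (nu : {measure set X -> \bar R}) : Prop :=
  forall B : set X, measurable B -> mbounded dist B -> (nu B < +oo)%E.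

(* A potential is a family (phi_k)_k ; we represent it as a single function
   on finite sequences: phi_k is phi restricted to sequences of size k. *)
Definition potential := seq X -> \bar R.

Definition tuple_measurable (k : nat) : set (set (k.-tuple X)) :=
  <<s [set C | exists (i : 'I_k) (A : set X),
                 measurable A /\ C = [set x : k.-tuple X | A (tnth x i)]] >>.

Definition measurable_potential (phi : potential) : Prop :=
  forall (k : nat) (B : set (\bar R)), measurable B ->
    tuple_measurable (k:=k) [set x : k.-tuple X | B (phi (tval x))].

Definition symmetric_potential (phi : potential) : Prop :=
  forall (k : nat) (x : k.-tuple X) (s : 'S_k),
    phi (tval [tuple tnth x (s i) | i < k]) = phi (tval x).

Definition is_potential (phi : potential) : Prop :=
  [/\ forall x, phi x != -oo%E, measurable_potential phi &
      symmetric_potential phi].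

Definition repulsive (phi : potential) : Prop := forall x, (0 <= phi x)%E.

(* x_S for S a subset of [k], k = size x, entries kept in index order *)
Definition subseq_of (x : seq X) (S : {set 'I_(size x)}) : seq X :=
  mask [seq i \in S | i <- enum 'I_(size x)] x.

Definition energy (phi : potential) (x : seq X) : \bar R :=
  (\sum_(S : {set 'I_(size x)} | S != finset.set0) phi (subseq_of S))%E.

Definition pin (phi : potential) (x : seq X) : potential :=
  fun y => (\sum_(S : {set 'I_(size x)}) phi (y ++ subseq_of S))%E.

(* iterated integral over Lambda^k (with respect to nu^k) *)
Fixpoint iint (nu : {measure set X -> \bar R}) (Lam : set X) (k : nat)
    (f : seq X -> \bar R) : \bar R :=
  match k with
  | 0 => f [::]
  | k'.+1 => (\int[nu]_(y in Lam) iint nu Lam k' (fun s => f (y :: s)))%E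
  end.

Definition zcoef (nu : {measure set X -> \bar R}) (Lam : set X)
    (phi : potential) (k : nat) : R :=
  fine (iint nu Lam k (fun x => expeR (- energy phi x))).

Definition zterm (nu : {measure set X -> \bar R}) (Lam : set X)
    (phi : potential) (lam : R[i]) (k : nat) : R[i] :=
  lam ^+ k / (k`!)%:R * (zcoef nu Lam phi k)%:C%C.

(* partition function: the complex series sum_k lam^k/k! int ..., its sum
   being computed through the real and imaginary parts *)
Definition Zpf (nu : {measure set X -> \bar R}) (Lam : set X)
    (phi : potential) (lam : R[i]) : R[i] :=
  Complex (limn (series (fun k => complex.Re (zterm nu Lam phi lam k))))
          (limn (series (fun k => complex.Im (zterm nu Lam phi lam k)))).

Definition kappa1 (nu : {measure set X -> \bar R}) (Lam : set X)
    (phi : potential) (lam : R[i]) (x : X) : R[i] :=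
  lam * Zpf nu Lam (pin phi [:: x]) lam / Zpf nu Lam phi lam.

Definition Dz (dist : X -> X -> R) (z : X) (x : seq X) : R :=
  \sum_(xj <- x) dist z xj.

Definition pin_trunc (dist : X -> X -> R) (z : X) (phi : potential)
    (y : X) (t : \bar R) : potential :=
  fun x => if ((Dz dist z x)%:E < t)%E then pin phi [:: y] x else phi x.

Definition kill (phi : potential) (Delta : set X) : potential :=
  fun x => match x with
           | [:: a] => if pselect (Delta a) then +oo%E else phi x
           | _ => phi x
           end.

Definition closed_under_modification (dist : X -> X -> R) (z : X)
    (Phi : set potential) : Prop :=
  (forall phi, Phi phi -> forall (y : X) (t : \bar R), (0 <= t)%E ->
      Phi (pin_trunc dist z phi y t)) /\
  (forall phi, Phi phi -> forall Delta : set X, measurable Delta ->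
      Phi (kill phi Delta)).

Definition zero_free (nu : {measure set X -> \bar R}) (Lam : set X)
    (Phi : set potential) (lam : R[i]) (delta : R) : Prop :=
  forall phi, Phi phi -> delta%:C%C <= `|Zpf nu Lam phi lam|.

End Defs.

Definition cbounded {R : rcfType} (U : set R[i]) : Prop :=
  exists M : R, forall lam, U lam -> `|lam| <= M%:C%C.

Definition cdisc {R : rcfType} (c : R[i]) (r : R) : set R[i] :=
  [set lam | `|lam - c| < r%:C%C].

Definition unif_equicont {R : rcfType} {I : Type} (P : set I) (W : set R[i])
    (f : I -> R[i] -> R[i]) : Prop :=
  forall e : R, 0 < e -> exists2 eta : R, 0 < eta &
    forall i, P i -> forall a b, W a -> W b -> `|a - b| < eta%:C%C ->
      `|f i a - f i b| < e%:C%C.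

(* Main.v *)
Require Import Defs.
From HB Require Import structures.
From mathcomp Require Import all_boot all_order all_algebra.
From mathcomp Require Import all_classical all_reals all_analysis measurable_realfun.
From mathcomp Require Import fingroup perm complex.
From mathcomp Require Import ring lra.
Import Order.TTheory GRing.Theory Num.Theory numFieldNormedType.Exports.
Local Open Scope classical_set_scope.
Local Open Scope ring_scope.
Section Int.
Context {d : measure_display} {T : measurableType d} {R : realType}.

Lemma integral_mono_nm (mu : {measure set T -> \bar R}) (D : set T) (f g : T -> \bar R) :
  (forall x, D x -> (0 <= f x)%E) -> (forall x, D x -> (f x <= g x)%E) ->
  (\int[mu]_(x in D) f x <= \int[mu]_(x in D) g x)%E.
Proof.
move=> f0 fg.
have g0 : forall x, D x -> (0 <= g x)%E by move=> x Dx; exact: le_trans (f0 x Dx) (fg x Dx).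
rewrite (ge0_integralE _ f0) (ge0_integralE _ g0) /=.
apply: ge_ereal_sup => _ [h hf <-]; apply: ereal_sup_ubound; exists h => //= x.
apply: le_trans (hf x) _; rewrite /patch; case: ifPn => // xD; apply: fg; by move: xD; rewrite in_setE.
Qed.

Lemma iint_bound (nu : {measure set T -> \bar R}) (Lam : set T) (mL : measurable Lam)
  (W : R) (hW : nu Lam = W%:E) k (f : seq T -> \bar R) :
  (forall s, (0 <= f s)%E /\ (f s <= 1)%E) ->
  (0 <= iint nu Lam k f)%E /\ (iint nu Lam k f <= (W ^+ k)%:E)%E.
Proof.
elim: k f => [|k IH] f hf /=; first by rewrite expr0; exact: hf.
split.
  by apply: integral_ge0 => y _; case: (IH (fun s => f (y :: s))).
apply: le_trans (integral_mono_nm nu Lam _ (cst (W ^+ k)%:E) _ _) _.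
- by move=> y _; case: (IH (fun s => f (y :: s))).
- by move=> y _; case: (IH (fun s => f (y :: s))).
by rewrite integral_cst // hW -EFinM exprSr.
Qed.

End Int.
Section Z.
Context {R : realType} {d : measure_display} {X : measurableType d}.

Lemma energy_ge0 (phi : @potential R d X) : repulsive phi -> forall x, (0 <= energy phi x)%E.
Proof. by move=> hp x; rewrite /energy; apply: sume_ge0 => S _; exact: hp. Qed.

Lemma pin_rep (phi : @potential R d X) x : repulsive phi -> repulsive (pin phi [:: x]).
Proof. by move=> hp y; rewrite /pin; apply: sume_ge0 => S _; exact: hp. Qed.

Lemma zcoef_bound (nu : {measure set X -> \bar R}) (Lam : set X) (mL : measurable Lam)
  (W : R) (hW : nu Lam = W%:E) (phi : @potential R d X) k :
  repulsive phi -> 0 <= zcoef nu Lam phi k <= W ^+ k.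
Proof.
move=> hp; rewrite /zcoef.
have hf : forall s, (0 <= expeR (- energy phi s))%E /\ (expeR (- energy phi s) <= 1)%E.
  move=> s; split; first exact: expeR_ge0.
  by rewrite -expeR0 lee_expeR oppe_le0 energy_ge0.
have [h0 h1] := @iint_bound _ _ _ nu Lam mL W hW k _ hf.
move: h0 h1; case: (iint _ _ _ _) => [r||] //=; rewrite !lee_fin => -> -> //.

Qed.
End Z.
Section NC.
Context {R : realType}.
Local Notation nc := (@Normc.normc R).

Lemma nc_ge0 (z : R[i]) : 0 <= nc z.
Proof. by case: z => a b /=; exact: sqrtr_ge0. Qed.

Lemma ncM (x y : R[i]) : nc (x * y) = nc x * nc y.
Proof. exact: Normc.normcM. Qed.

Lemma ncD (x y : R[i]) : nc (x + y) <= nc x + nc y.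
Proof. exact: le_normcD. Qed.

Lemma ncN (x : R[i]) : nc (- x) = nc x.
Proof. exact: normcN. Qed.

Lemma ncV (x : R[i]) : nc (x^-1) = (nc x)^-1.
Proof. exact: Normc.normcV. Qed.

Lemma ncX (x : R[i]) n : nc (x ^+ n) = nc x ^+ n.
Proof.
elim: n => [|n IH]; first by rewrite !expr0 Normc.normc1.
by rewrite !exprS ncM IH.
Qed.

Lemma ncR (r : R) : nc (r%:C)%C = `|r|.
Proof. by rewrite /= expr0n /= addr0 sqrtr_sqr. Qed.

Lemma nc_Re (z : R[i]) : `|complex.Re z| <= nc z.
Proof.
case: z => a b /=; rewrite -sqrtr_sqr; apply: ler_wsqrtr.
by rewrite lerDl sqr_ge0.
Qed.

Lemma nc_Im (z : R[i]) : `|complex.Im z| <= nc z.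
Proof.
case: z => a b /=; rewrite -sqrtr_sqr; apply: ler_wsqrtr.
by rewrite lerDr sqr_ge0.
Qed.

Lemma nc_cplx (x y : R) : nc (Complex x y) <= `|x| + `|y|.
Proof.
rewrite /= -[leRHS]ger0_norm ?addr_ge0 // -sqrtr_sqr; apply: ler_wsqrtr.
have hx : `|x| ^+ 2 = x ^+ 2 by rewrite real_normK ?num_real.
have hy : `|y| ^+ 2 = y ^+ 2 by rewrite real_normK ?num_real.
rewrite sqrrD hx hy -addrA [_ *+ 2 + _]addrC addrA lerDl.
by rewrite mulrn_wge0 // mulr_ge0.
Qed.

Lemma nc_eq0 (x : R[i]) : nc x = 0 -> x = 0.
Proof. exact: Normc.eq0_normc. Qed.

Lemma nc0 : nc 0 = 0.
Proof. exact: Normc.normc0. Qed.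

Lemma ncB (x y : R[i]) : nc (x - y) = nc (y - x).
Proof. by rewrite -opprB ncN. Qed.

Lemma powdiff (a b : R[i]) (M : R) : 1 <= M -> nc a <= M -> nc b <= M ->
  forall k, nc (a ^+ k - b ^+ k) <= k%:R * M ^+ k * nc (a - b).
Proof.
move=> M1 ha hb; elim => [|k IH]; first by rewrite !expr0 subrr nc0 mul0r mul0r.
have -> : a ^+ k.+1 - b ^+ k.+1 = a * (a ^+ k - b ^+ k) + (a - b) * b ^+ k.
  by rewrite !exprS; ring.
apply: le_trans (ncD _ _) _; rewrite !ncM ncX.
have M0 : 0 <= M by apply: le_trans M1; exact: ler01.
have e1 : nc a * nc (a ^+ k - b ^+ k) <= M * (k%:R * M ^+ k * nc (a - b)).
  by apply: ler_pM => //; exact: nc_ge0.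
have e2 : nc (a - b) * nc b ^+ k <= nc (a - b) * M ^+ k.+1.
  apply: ler_wpM2l; first exact: nc_ge0.
  apply: le_trans (lerXn2r _ _ _ hb) _ => //; rewrite ?nnegrE ?nc_ge0 //.
  by rewrite exprS ler_peMl //; exact: exprn_ge0.
apply: le_trans (lerD e1 e2) _.
rewrite exprS -addn1 natrD; rewrite exprS in e2.
have n0 := nc_ge0 (a - b).
have Mk : 0 <= M ^+ k by exact: exprn_ge0.
have : 0 <= k%:R :> R by [].
nra.
Qed.

End NC.
Section Ser.
Context {R : realType}.
Local Notation nc := (@Normc.normc R).

Lemma ser_bound (u w : nat -> R) : (forall k, `|u k| <= w k) -> cvgn (series w) ->
  cvgn (series u) /\ `|limn (series u)| <= limn (series w).
Proof.
move=> uw cw.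
have w0 k : 0 <= w k by apply: le_trans (uw k); exact: normr_ge0.
have cn : cvgn [normed series u].
  exact: (series_le_cvg (fun k => normr_ge0 (u k)) w0 uw cw).
have cu : cvgn (series u) by exact: (@normed_cvg _ R^o).
split => //; apply: le_trans (@lim_series_norm _ R^o _ cn) _.
exact: lim_series_le.
Qed.

Definition tm (c : nat -> R) (lam : R[i]) (k : nat) : R[i] :=
  lam ^+ k / (k`!)%:R * (c k)%:C%C.

Definition Fs (c : nat -> R) (lam : R[i]) : R[i] :=
  Complex (limn (series (fun k => complex.Re (tm c lam k))))
          (limn (series (fun k => complex.Im (tm c lam k)))).

Lemma tmE c lam k : tm c lam k = lam ^+ k * (c k / (k`!)%:R)%:C%C.
Proof.
rewrite /tm -mulrA; congr (_ * _); rewrite rmorphM /= fmorphV /= rmorph_nat mulrC //.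
Qed.

Lemma ex2 (M V : R) k : (2 * M * V) ^+ k = 2 ^+ k * M ^+ k * V ^+ k.
Proof. by rewrite !exprMn. Qed.

Lemma k_le2k k : k%:R <= 2 ^+ k :> R.
Proof.
rewrite -natrX ler_nat; apply: ltnW; exact: ltn_expl.
Qed.

Lemma tm_bound (c : nat -> R) (V M : R) a k : 0 <= V -> 1 <= M ->
  0 <= c k <= V ^+ k -> nc a <= M -> nc (tm c a k) <= exp_coeff (2 * M * V) k.
Proof.
move=> V0 M1 /andP[c0 cV] ha; rewrite tmE ncM ncX ncR /exp_coeff /= ex2.
have f0 : 0 <= (k`!%:R : R)^-1 by rewrite invr_ge0.
have M0 : 0 <= M by apply: le_trans M1; exact: ler01.
have s0 : 0 <= c k / k`!%:R by rewrite mulr_ge0.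
rewrite ger0_norm //.
have hp := k_le2k k.
have hq : nc a ^+ k <= M ^+ k by apply: lerXn2r; rewrite ?nnegrE ?nc_ge0.
have q0 : 0 <= nc a ^+ k by rewrite exprn_ge0 // nc_ge0.
have M0k : 0 <= M ^+ k by exact: exprn_ge0.
have V0k : 0 <= V ^+ k by exact: exprn_ge0.
have p1 : 1 <= 2 ^+ k :> R by rewrite exprn_ege1 // ler1n.
rewrite /(_ / _) in s0 *.
set f := (k`!%:R : R)^-1 in f0 s0 *.
have e1 : nc a ^+ k * (c k * f) <= M ^+ k * (V ^+ k * f).
  by apply: ler_pM => //; rewrite ler_wpM2r.
apply: le_trans e1 _.
have e2 : M ^+ k * (V ^+ k * f) <= 2 ^+ k * (M ^+ k * (V ^+ k * f)).
  by rewrite ler_peMl // !mulr_ge0.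
apply: le_trans e2 _; rewrite le_eqVlt; apply/orP; left; apply/eqP; ring.
Qed.

Lemma tm_lip (c : nat -> R) (V M : R) a b k : 0 <= V -> 1 <= M ->
  0 <= c k <= V ^+ k -> nc a <= M -> nc b <= M ->
  nc (tm c a k - tm c b k) <= nc (a - b) * exp_coeff (2 * M * V) k.
Proof.
move=> V0 M1 /andP[c0 cV] ha hb; rewrite !tmE -mulrBl ncM ncR /exp_coeff /= ex2.
have f0 : 0 <= (k`!%:R : R)^-1 by rewrite invr_ge0.
have M0 : 0 <= M by apply: le_trans M1; exact: ler01.
have s0 : 0 <= c k / k`!%:R by rewrite mulr_ge0.
rewrite ger0_norm //.
have hp := k_le2k k.
have hd := @powdiff _ a b M M1 ha hb k.
have d0 := @nc_ge0 _ (a ^+ k - b ^+ k).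
have n0 := @nc_ge0 _ (a - b).
have M0k : 0 <= M ^+ k by exact: exprn_ge0.
have V0k : 0 <= V ^+ k by exact: exprn_ge0.
have k0 : 0 <= k%:R :> R by [].
rewrite /(_ / _) in s0 *.
set f := (k`!%:R : R)^-1 in f0 s0 *.
set D := nc (a ^+ k - b ^+ k) in hd d0 *.
set n := nc (a - b) in hd n0 *.
have e1 : D * (c k * f) <= (k%:R * M ^+ k * n) * (V ^+ k * f).
  apply: ler_pM; [exact: d0|exact: s0|exact: hd|by rewrite ler_wpM2r].
apply: le_trans e1 _.
have e2 : k%:R * M ^+ k * n <= 2 ^+ k * M ^+ k * n.
  by rewrite ler_wpM2r // ler_wpM2r.
have e3 := ler_wpM2r (mulr_ge0 V0k f0) e2.
apply: le_trans e3 _; rewrite le_eqVlt; apply/orP; left; apply/eqP; ring.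
Qed.

End Ser.
Section Fs.
Context {R : realType}.
Local Notation nc := (@Normc.normc R).

Lemma ReB (x y : R[i]) : complex.Re (x - y) = complex.Re x - complex.Re y.
Proof. by case: x; case: y. Qed.
Lemma ImB (x y : R[i]) : complex.Im (x - y) = complex.Im x - complex.Im y.
Proof. by case: x; case: y. Qed.

Lemma subC (x y : R[i]) : x - y = Complex (complex.Re x - complex.Re y) (complex.Im x - complex.Im y).
Proof. by case: x; case: y. Qed.

Variables (c : nat -> R) (V M : R).
Hypothesis V0 : 0 <= V.
Hypothesis M1 : 1 <= M.
Hypothesis cb : forall k, 0 <= c k <= V ^+ k.
Let S := limn (series (exp_coeff (2 * M * V))).
Let cS : cvgn (series (exp_coeff (2 * M * V))) := is_cvg_series_exp_coeff _.

Lemma Fs_bound a : nc a <= M -> nc (Fs c a) <= S + S.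
Proof.
move=> ha; rewrite /Fs; apply: le_trans (nc_cplx _ _) _; apply: lerD.
- have [_ //] := @ser_bound _ (fun k => complex.Re (tm c a k)) _ 
    (fun k => le_trans (nc_Re _) (@tm_bound _ c V M a k V0 M1 (cb k) ha)) cS.
- have [_ //] := @ser_bound _ (fun k => complex.Im (tm c a k)) _ 
    (fun k => le_trans (nc_Im _) (@tm_bound _ c V M a k V0 M1 (cb k) ha)) cS.
Qed.

Lemma S_ge0 : 0 <= S.
Proof.
have M0 : 0 <= M by apply: le_trans M1; exact: ler01.
have e k : `|exp_coeff (2 * M * V) k| <= exp_coeff (2 * M * V) k.
  by rewrite ger0_norm // exp_coeff_ge0 // !mulr_ge0.
have [_ h] := @ser_bound _ (exp_coeff (2 * M * V)) (exp_coeff (2 * M * V)) e cS.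
exact: le_trans (normr_ge0 _) h.
Qed.

Lemma Fs_lip a b : nc a <= M -> nc b <= M ->
  nc (Fs c a - Fs c b) <= (S + S) * nc (a - b).
Proof.
move=> ha hb.
pose ra := fun k => complex.Re (tm c a k).
pose rb := fun k => complex.Re (tm c b k).
pose ia := fun k => complex.Im (tm c a k).
pose ib := fun k => complex.Im (tm c b k).
have [cra _] := @ser_bound _ ra _
    (fun k => le_trans (nc_Re _) (@tm_bound _ c V M a k V0 M1 (cb k) ha)) cS.
have [crb _] := @ser_bound _ rb _
    (fun k => le_trans (nc_Re _) (@tm_bound _ c V M b k V0 M1 (cb k) hb)) cS.
have [cia _] := @ser_bound _ ia _
    (fun k => le_trans (nc_Im _) (@tm_bound _ c V M a k V0 M1 (cb k) ha)) cS.
have [cib _] := @ser_bound _ ib _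
    (fun k => le_trans (nc_Im _) (@tm_bound _ c V M b k V0 M1 (cb k) hb)) cS.
have hR : complex.Re (Fs c a) - complex.Re (Fs c b) = limn (series (ra - rb)).
  exact: (esym (lim_seriesB cra crb)).
have hI : complex.Im (Fs c a) - complex.Im (Fs c b) = limn (series (ia - ib)).
  exact: (esym (lim_seriesB cia cib)).
rewrite subC hR hI.
apply: le_trans (nc_cplx _ _) _.
have cw := @is_cvg_seriesZ _ _ (nc (a - b)) cS.
have hw : limn (series (nc (a - b) *: exp_coeff (2 * M * V))) = nc (a - b) * S.
  by rewrite lim_seriesZ.
have hb1 : forall k, `|(ra - rb) k| <= (nc (a - b) *: exp_coeff (2 * M * V)) k.
  move=> k; change (`|complex.Re (tm c a k) - complex.Re (tm c b k)| <= nc (a - b) * exp_coeff (2 * M * V) k); rewrite -ReB; apply: le_trans (nc_Re _) _.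
  exact: (@tm_lip _ c V M a b k V0 M1 (cb k) ha hb).
have hb2 : forall k, `|(ia - ib) k| <= (nc (a - b) *: exp_coeff (2 * M * V)) k.
  move=> k; change (`|complex.Im (tm c a k) - complex.Im (tm c b k)| <= nc (a - b) * exp_coeff (2 * M * V) k); rewrite -ImB; apply: le_trans (nc_Im _) _.
  exact: (@tm_lip _ c V M a b k V0 M1 (cb k) ha hb).
have [_ h1] := @ser_bound _ _ _ hb1 cw.
have [_ h2] := @ser_bound _ _ _ hb2 cw.
rewrite hw in h1 h2.
by rewrite mulrDl mulrC; apply: lerD.
Qed.

End Fs.
Section Fin.
Context {R : realType}.
Local Notation nc := (@Normc.normc R).

Lemma lip_equicont {I : Type} (P : set I) (W : set R[i]) (f : I -> R[i] -> R[i]) (L : R) :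
  0 <= L -> (forall i, P i -> forall a b, W a -> W b ->
     nc (f i a - f i b) <= L * nc (a - b)) -> unif_equicont P W f.
Proof.
move=> L0 H e e0.
have L1 : 0 < L + 1 by lra.
exists (e / (L + 1)); first by rewrite divr_gt0.
move=> i Pi a b Wa Wb.
rewrite -[`|a - b|]/((nc (a - b))%:C)%C -[`|f i a - f i b|]/((nc (f i a - f i b))%:C)%C.
rewrite !ltcR ltr_pdivlMr // => hab.
have := H i Pi a b Wa Wb.
have := @nc_ge0 _ (a - b).
nra.
Qed.

Lemma le3 (x1 y1 z1 x2 y2 z2 : R) : 0 <= x1 -> 0 <= y1 -> 0 <= z1 ->
  x1 <= x2 -> y1 <= y2 -> z1 <= z2 -> x1 * y1 * z1 <= x2 * y2 * z2.
Proof.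
move=> h1 h2 h3 h4 h5 h6; apply: ler_pM => //; first exact: mulr_ge0.
exact: ler_pM.
Qed.

Lemma quot_lip (a b Aa Ab Ba Bb : R[i]) (M K0 L dl : R) :
  0 <= M -> 0 <= K0 -> 0 <= L -> 0 < dl ->
  nc a <= M -> nc b <= M -> nc Aa <= K0 -> nc Ab <= K0 -> nc Bb <= K0 ->
  nc (Aa - Ab) <= L * nc (a - b) -> nc (Ba - Bb) <= L * nc (a - b) ->
  dl <= nc Ba -> dl <= nc Bb ->
  nc (a * Aa / Ba - b * Ab / Bb) <=
    (K0 * K0 + 2 * M * L * K0) / (dl * dl) * nc (a - b).
Proof.
move=> M0 K00 L0 dl0 ha hb hAa hAb hBb hA hB dBa dBb.
have nz x : dl <= nc x -> x != 0.
  move=> h; apply/eqP => x0; move: h; rewrite x0 nc0; lra.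
have Ba0 := nz _ dBa; have Bb0 := nz _ dBb.
have -> : a * Aa / Ba - b * Ab / Bb =
   ((a - b) * Aa * Bb + b * (Aa - Ab) * Bb + b * Ab * (Bb - Ba)) * (Ba * Bb)^-1.
  by field; rewrite Ba0 Bb0.
rewrite ncM ncV ncM.
set n := nc (a - b).
have n0 : 0 <= n by exact: nc_ge0.
have t1 : nc ((a - b) * Aa * Bb) <= n * K0 * K0.
  by rewrite !ncM; apply: le3 => //; exact: nc_ge0.
have t2 : nc (b * (Aa - Ab) * Bb) <= M * (L * n) * K0.
  by rewrite !ncM; apply: le3 => //; exact: nc_ge0.
have t3 : nc (b * Ab * (Bb - Ba)) <= M * K0 * (L * n).
  by rewrite !ncM ncB; apply: le3 => //; exact: nc_ge0.
have hN : nc ((a - b) * Aa * Bb + b * (Aa - Ab) * Bb + b * Ab * (Bb - Ba))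
    <= n * K0 * K0 + M * (L * n) * K0 + M * K0 * (L * n).
  apply: le_trans (ncD _ _) _; apply: lerD => //.
  by apply: le_trans (ncD _ _) _; apply: lerD.
have pBa : 0 < nc Ba by lra.
have pBb : 0 < nc Bb by lra.
have hD : (nc Ba * nc Bb)^-1 <= (dl * dl)^-1.
  rewrite lef_pV2 ?posrE ?mulr_gt0 //.
  by apply: ler_pM => //; lra.
apply: le_trans (ler_pM (nc_ge0 _) _ hN hD) _.
  by rewrite invr_ge0 mulr_ge0 // ltW.
rewrite le_eqVlt; apply/orP; left; apply/eqP; field; by rewrite lt0r_neq0.
Qed.

End Fin.
Lemma arith {R : realType} (d A B C p q r : R) : C <= p -> B <= A + C -> d <= B -> p <= q ->
  2 * q + 2 * r <= d -> 0 < r -> d / 2 <= A.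
Proof. lra. Qed.

Lemma arith2 {R : realType} (d : R) : 0 < d -> d / 2 <= 0 -> False.
Proof. lra. Qed.

Theorem mainTheorem3 (R : realType) (d : measure_display) (X : measurableType d)
  (dist : X -> X -> R) (nu : {measure set X -> \bar R})
  (Hdist : polish_borel dist) (Hnu : locally_finite dist nu)
  (Phi : set (@potential R d X))
  (HPhi : forall phi, Phi phi -> is_potential phi /\ repulsive phi)
  (U : set R[i]) (HU : cbounded U)
  (Lam : set X) (HLb : mbounded dist Lam) (HLm : measurable Lam) :
  unif_equicont Phi U (fun phi lam => Zpf nu Lam phi lam) /\
  (forall (z : X) (lam0 : R[i]) (delta : R),
     closed_under_modification dist z Phi -> 0 < delta ->
     zero_free nu Lam Phi lam0 delta ->
     exists2 r : R, 0 < r &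
       (forall phi, Phi phi -> forall lam, cdisc lam0 r lam ->
          Zpf nu Lam phi lam != 0) /\
       unif_equicont [set p | Phi p.1 /\ Lam p.2] (cdisc lam0 r)
         (fun p lam => kappa1 nu Lam p.1 lam p.2)).
Proof.
have muL := Hnu Lam HLm HLb.
set V := fine (nu Lam).
have hW : nu Lam = V%:E by rewrite fineK // ge0_fin_numE // measure_ge0.
have V0 : 0 <= V by rewrite fine_ge0 // measure_ge0.
have cbd : forall phi, repulsive phi -> forall k, 0 <= zcoef nu Lam phi k <= V ^+ k.
  by move=> phi hp k; exact: (@zcoef_bound _ _ _ nu Lam HLm V hW phi k hp).
have ZE : forall phi lam, Zpf nu Lam phi lam = Fs (zcoef nu Lam phi) lam by [].
split.
  case: HU => M0 hM0.
  set M := `|M0| + 1.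
  have M1 : 1 <= M by rewrite /M lerDr.
  have hUM : forall lam, U lam -> Normc.normc lam <= M.
    move=> lam /hM0; rewrite -[`|lam|]/((Normc.normc lam)%:C)%C lecR => h.
    apply: le_trans h _; apply: le_trans (ler_norm _) _; rewrite /M lerDl //.
  have S0 := S_ge0 V M V0 M1.
  apply: (@lip_equicont _ _ _ _ _ (limn (series (exp_coeff (2 * M * V))) + limn (series (exp_coeff (2 * M * V))))).
    exact: addr_ge0.
  move=> phi Pphi a b Ua Ub; rewrite !ZE.
  exact: (@Fs_lip _ _ V M V0 M1 (cbd phi (HPhi phi Pphi).2) _ _ (hUM a Ua) (hUM b Ub)).
move=> z lam0 delta _ dpos zf.
set M := Normc.normc lam0 + 1.
have M1 : 1 <= M by rewrite /M lerDr; exact: nc_ge0.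
set S := limn (series (exp_coeff (2 * M * V))).
have S0 : 0 <= S := S_ge0 V M V0 M1.
set L := S + S.
have L0 : 0 <= L by exact: addr_ge0.
have L1 : 0 < 2 * (L + 1) by lra.
set r := Num.min 1 (delta / (2 * (L + 1))).
have r0 : 0 < r by rewrite lt_min ltr01 divr_gt0.
have r1 : r <= 1 by rewrite /r ge_min lexx.
have r2 : r * (2 * (L + 1)) <= delta.
  by rewrite -ler_pdivlMr // /r ge_min lexx orbT.
have hdisc : forall lam, cdisc lam0 r lam ->
    Normc.normc (lam - lam0) < r /\ Normc.normc lam <= M.
  move=> lam; rewrite /cdisc /= -[`|lam - lam0|]/((Normc.normc (lam - lam0))%:C)%C ltcR => h.
  split => //.
  have -> : lam = lam0 + (lam - lam0) by rewrite addrC subrK.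
  apply: le_trans (ncD _ _) _; rewrite /M lerD2l; lra.
have M0' : Normc.normc lam0 <= M by rewrite /M lerDl.
have hZ : forall phi, Phi phi -> forall lam, cdisc lam0 r lam ->
    delta / 2 <= Normc.normc (Zpf nu Lam phi lam).
  move=> phi Pphi lam hl.
  have := zf phi Pphi; rewrite -[`|Zpf nu Lam phi lam0|]/((Normc.normc (Zpf nu Lam phi lam0))%:C)%C lecR => hd.
  have [hl1 hl2] := hdisc lam hl.
  have hL := @Fs_lip _ _ V M V0 M1 (cbd phi (HPhi phi Pphi).2) _ _ hl2 M0'.
  rewrite -!ZE in hL.
  have hZ0 : Normc.normc (Zpf nu Lam phi lam0) <=
      Normc.normc (Zpf nu Lam phi lam) + Normc.normc (Zpf nu Lam phi lam - Zpf nu Lam phi lam0).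
    rewrite ncB; set A := Zpf nu Lam phi lam0; set B := Zpf nu Lam phi lam.
    have -> : Normc.normc A = Normc.normc (B + (A - B)) by rewrite addrC subrK.
    exact: ncD.
  have n0 := @nc_ge0 _ (lam - lam0).
  rewrite -/S -/L in hL.
  have e1 : L * Normc.normc (lam - lam0) <= L * r by rewrite ler_wpM2l // ltW.
  have e2 : r * (2 * (L + 1)) = 2 * (L * r) + 2 * r by ring.
  rewrite e2 in r2.
  exact: (@arith R delta _ _ _ _ _ r hL hZ0 hd e1 r2 r0).
exists r => //.
split.
  move=> phi Pphi lam hl; apply/eqP => h0.
  have := hZ phi Pphi lam hl; rewrite h0 nc0 => h; exact: (@arith2 R delta dpos h).
pose K0 := S + S.
apply: (@lip_equicont R _ _ _ _ ((K0 * K0 + 2 * M * L * K0) / (delta / 2 * (delta / 2)))).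
  have hd2 : 0 < delta / 2 by rewrite divr_gt0.
  have Mp : 0 <= M by apply: le_trans M1; exact: ler01.
  have K00 : 0 <= K0 by exact: addr_ge0.
  apply: divr_ge0; last by apply: mulr_ge0; exact: ltW.
  apply: addr_ge0; first exact: mulr_ge0.
  by rewrite !mulr_ge0.
move=> [phi x] [/= Pphi _] a b ha hb /=; rewrite /kappa1.
have [_ haM] := hdisc a ha.
have [_ hbM] := hdisc b hb.
have rep := (HPhi phi Pphi).2.
have rep' := @pin_rep _ _ _ phi x rep.
apply: (@quot_lip R a b _ _ _ _ M K0 L (delta / 2)).
- by apply: le_trans M1; exact: ler01.
- exact: addr_ge0.
- exact: L0.
- by rewrite divr_gt0.
- exact: haM.
- exact: hbM.
- by rewrite ZE; exact: (@Fs_bound _ _ V M V0 M1 (cbd _ rep') _ haM).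
- by rewrite ZE; exact: (@Fs_bound _ _ V M V0 M1 (cbd _ rep') _ hbM).
- by rewrite ZE; exact: (@Fs_bound _ _ V M V0 M1 (cbd _ rep) _ hbM).
- by rewrite !ZE; exact: (@Fs_lip _ _ V M V0 M1 (cbd _ rep') _ _ haM hbM).
- by rewrite !ZE; exact: (@Fs_lip _ _ V M V0 M1 (cbd _ rep) _ _ haM hbM).
- exact: hZ.
- exact: hZ.
Qed.
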